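(* Let $K$ and $L$ be $n$-element finite sets, $M=K\times L$, and let $u=(u_{kl})$ be a unitary matrix indexed by $K\times L$ all of whose entries are nonzero. Then every eigenspace of the Berezin transform $I_u$ on $F(M)$ is invariant under pointwise complex conjugation $f\mapsto\bar f$. In particular, for any eigenvalue $\theta$ of $I_u$ of multiplicity $k$, the $\theta$-eigenspace, regarded as a real vector space, is the direct sum of the $k$-dimensional real vector space of real-valued $\theta$-eigenfunctions and the $k$-dimensional real vector space of purely imaginary $\theta$-eigenfunctions.
   Context: For a finite set $J$, $F(J)$ denotes the space of complex-valued functions on $J$. For $f=(f_{kl})\in F(M)$, $C_uf$ and $D_uf$ are the operators on $F(K)$ with matrices $x_{kk'}=\sum_{l\in L}u_{kl}f_{kl}\bar u_{k'l}$ and $y_{kk'}=\sum_{l\in L}u_{kl}f_{k'l}\bar u_{k'l}$ respectively; these maps $F(M)\to\operatorname{End}F(K)$ are linear bijections. The Berezin transform is $I_u:=C_u^{-1}D_u:F(M)\to F(M)$; explicitly $(I_uf)_{kl}=\sum_{k'\in K,l'\in L}\frac{u_{kl'}u_{k'l}}{u_{kl}u_{k'l'}}f_{k'l'}|u_{k'l'}|^2$. It is unitary with respect to $\langle f,g\rangle_u=\sum_{k,l}f_{kl}\bar g_{kl}|u_{kl}|^2$. *)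

(* Defs.v *)
From HB Require Import structures.
From mathcomp Require Import all_boot all_order all_algebra.
Set Implicit Arguments. Unset Strict Implicit. Unset Printing Implicit Defensive.
Import Order.TTheory GRing.Theory Num.Theory.
Local Open Scope ring_scope.

(* Complex field: any numClosedFieldType C (e.g. complex R, algC); x^* is
   complex conjugation.  F(M) for M = K x L is {ffun K * L -> C^o}, a
   finite-dimensional C-vector space (vectType). *)
Notation Fun C K L := {ffun (K * L)%type -> (C^o)%type}.

Section Defs.
Variables (C : numClosedFieldType) (K L : finType).

Definition unitary (u : K -> L -> C) : Prop :=
  (forall k k' : K, \sum_(l : L) u k l * (u k' l)^* = (k == k')%:R) /\
  (forall l l' : L, \sum_(k : K) (u k l)^* * u k l' = (l == l')%:R).

Definition berezin (u : K -> L -> C) (f : Fun C K L) : Fun C K L :=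
  [ffun kl : (K * L)%type =>
     \sum_(k' : K) \sum_(l' : L)
        (u kl.1 l' * u k' kl.2) / (u kl.1 kl.2 * u k' l')
        * f (k', l') * (u k' l' * (u k' l')^*)].

Definition conjf (f : Fun C K L) : Fun C K L := [ffun kl => (f kl)^*].

Definition real_valued (f : Fun C K L) : Prop := forall kl, (f kl)^* = f kl.
Definition imag_valued (f : Fun C K L) : Prop := forall kl, (f kl)^* = - f kl.

Definition berezin_eigenspace (u : K -> L -> C) (theta : C) : {vspace Fun C K L} :=
  lker (linfun (fun f : Fun C K L => berezin u f - theta *: f)).

End Defs.

(* Main.v *)
Require Import Defs.
From HB Require Import structures.
From mathcomp Require Import all_boot all_order all_algebra ring.
Import Order.TTheory GRing.Theory Num.Theory.
Local Open Scope ring_scope.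
Section S.
Variables (C : numClosedFieldType) (K L : finType).
Implicit Types (u : K -> L -> C) (f g : Fun C K L).

Lemma berezin_linear u : linear (berezin u).
Proof.
move=> a f g; apply/ffunP=> x; rewrite !ffunE scaler_sumr -big_split.
apply: eq_bigr => k _; rewrite scaler_sumr -big_split; apply: eq_bigr => l _.
rewrite !ffunE /GRing.scale /=; ring.
Qed.

Definition bop u (theta : C) := fun f : Fun C K L => berezin u f - theta *: f.
Lemma bop_linear u theta : linear (bop u theta).
Proof.
move=> a f g; rewrite /bop berezin_linear scalerDr scalerA mulrC -scalerA.
rewrite scalerBr; by rewrite addrACA opprD.
Qed.
HB.instance Definition _ u theta := GRing.isLinear.Build C (Fun C K L) (Fun C K L) *:%R (bop u theta) (bop_linear u theta).

Lemma memE u theta f : (f \in berezin_eigenspace u theta) = (berezin u f == theta *: f).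
Proof.
rewrite /berezin_eigenspace memv_ker.
have -> : (fun f : Fun C K L => berezin u f - theta *: f) = bop u theta by [].
by rewrite lfunE /bop subr_eq0.
Qed.
Variables (u : K -> L -> C) (Hu : unitary u) (Hnz : forall k l, u k l != 0).

Lemma Ipair f x : berezin u f x * u x.1 x.2 =
  \sum_y u y.1 x.2 * u x.1 y.2 * (u y.1 y.2)^* * f y.
Proof.
rewrite ffunE pair_bigA mulr_suml; apply: eq_bigr => -[k l] _ /=.
have h1 := Hnz x.1 x.2; have h2 := Hnz k l.
field; rewrite ?h1 ?h2 //.
Qed.

Lemma BI f : conjf (berezin u (conjf (berezin u f))) = f.
Proof.
apply/ffunP => x; rewrite ffunE.
have hx : (u x.1 x.2)^* != 0 by rewrite conjC_eq0 Hnz.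
apply: (mulIf hx); rewrite -rmorphM Ipair rmorph_sum /=.
under eq_bigr => y _ do rewrite ffunE !rmorphM /= !conjCK -mulrA [_ * berezin _ _ _]mulrC Ipair mulr_sumr.
rewrite exchange_big /=.
under eq_bigr => z _.
  have -> : \sum_y (u y.1 x.2)^* * (u x.1 y.2)^* *
       
       (u z.1 y.2 * u y.1 z.2 * (u z.1 z.2)^* * f z) =
       ((x.2 == z.2)%:R * (z.1 == x.1)%:R) * ((u z.1 z.2)^* * f z).
    rewrite -Hu.1 -Hu.2 !mulr_suml.
    under [RHS]eq_bigr => k _ do rewrite mulr_sumr mulr_suml.
    rewrite pair_bigA /=; apply: eq_bigr => y _; ring.
  over.
rewrite (bigD1 x) //= !eqxx mul1r big1 ?addr0 //.
  by rewrite mul1r mulrC.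
move=> z hz; case: eqP => [e2|_]; last by rewrite !mul0r.
case: eqP => [e1|_]; last by rewrite mulr0 mul0r.
by case/negP: hz; apply/eqP; move: e1 e2; case: z => a b /= -> <-; case: (x).
Qed.

Lemma Isym f g : \sum_x berezin u f x * g x * (u x.1 x.2 * (u x.1 x.2)^*) =
  \sum_x f x * berezin u g x * (u x.1 x.2 * (u x.1 x.2)^*).
Proof.
transitivity (\sum_x (berezin u f x * u x.1 x.2) * ((u x.1 x.2)^* * g x)).
  by apply: eq_bigr => x _; ring.
transitivity (\sum_x (berezin u g x * u x.1 x.2) * ((u x.1 x.2)^* * f x)); last first.
  by apply: eq_bigr => x _; ring.
under eq_bigr => x _ do rewrite Ipair mulr_suml.
under [RHS]eq_bigr => x _ do rewrite Ipair mulr_suml.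
rewrite [RHS]exchange_big; apply: eq_bigr => x _; apply: eq_bigr => y _; ring.
Qed.

Lemma berezinZ a f : berezin u (a *: f) = a *: berezin u f.
Proof.
apply/ffunP=> x; rewrite !ffunE scaler_sumr; apply: eq_bigr => k _.
rewrite scaler_sumr; apply: eq_bigr => l _; rewrite !ffunE /GRing.scale /=; ring.
Qed.

Lemma conjfZ a f : conjf (a *: f) = a^* *: conjf f.
Proof. by apply/ffunP=> x; rewrite !ffunE rmorphM. Qed.

Lemma conj_eig theta f : berezin u f = theta *: f ->
  berezin u (conjf f) = theta *: conjf f.
Proof.
move=> ef.
have st x : (f x)^* = theta^* * berezin u (conjf f) x.
  have := congr1 (fun g : Fun C K L => g x) (BI f).
  rewrite ef conjfZ berezinZ => <-; rewrite [in LHS]ffunE conjCK [in LHS]ffunE /GRing.scale /=. by [].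
have [->|fne] := eqVneq f 0.
  have -> : conjf (0 : Fun C K L) = 0 by apply/ffunP=> x; rewrite !ffunE rmorph0.
  by rewrite -(scale0r (0 : Fun C K L)) berezinZ !scale0r scaler0.
have [x0 hx0] : exists x0, f x0 != 0.
  case: (pickP (fun x => f x != 0)) => [x0 h | h]; first by exists x0.
  by case/eqP: fne; apply/ffunP => x; rewrite ffunE; move/negbFE: (h x) => /eqP.
pose S := \sum_x f x * conjf f x * (u x.1 x.2 * (u x.1 x.2)^*).
have Sne : S != 0.
  apply/negP => /eqP S0.
  have h0 : forall x, true -> 0 <= f x * conjf f x * (u x.1 x.2 * (u x.1 x.2)^*).
    by move=> x _; rewrite ffunE -!normCK mulr_ge0 ?exprn_ge0.
  have := psumr_eq0P h0 S0 (i:=x0) isT; rewrite ffunE -!normCK => /eqP.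
  by rewrite mulf_eq0 !expf_eq0 /= !normr_eq0 (negPf hx0) (negPf (Hnz _ _)).
have tt : theta^* * theta = 1.
  have e1 : \sum_x berezin u f x * conjf f x * (u x.1 x.2 * (u x.1 x.2)^*) = theta * S.
    rewrite /S mulr_sumr; apply: eq_bigr => x _; rewrite ef [in LHS]ffunE /GRing.scale /=; ring.
  have e2 : theta^* * \sum_x f x * berezin u (conjf f) x * (u x.1 x.2 * (u x.1 x.2)^*) = S.
    rewrite /S mulr_sumr; apply: eq_bigr => x _; rewrite [conjf f x]ffunE st; ring.
  apply: (mulIf Sne); rewrite mul1r.
  by rewrite -mulrA -e1 Isym e2.
apply/ffunP => x; rewrite [in RHS]ffunE [conjf f x]ffunE /GRing.scale /= st mulrA.
by rewrite mulrC in tt; rewrite tt mul1r.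
Qed.
End S.

Section Greedy.
Variables (C : numClosedFieldType) (K L : finType).
Variable E : {vspace Fun C K L}.
Hypothesis HE : forall f, f \in E -> conjf f \in E.

Definition re (f : Fun C K L) := (2^-1 : C) *: (f + conjf f).
Definition im (f : Fun C K L) := (- 'i : C) *: ((2^-1 : C) *: (f - conjf f)).

Lemma conj2 : (2^-1 : C)^* = 2^-1.
Proof. by rewrite fmorphV rmorph_nat. Qed.

Lemma re_real f : real_valued (re f).
Proof. by move=> x; rewrite !ffunE /GRing.scale /= rmorphM rmorphD /= conjCK fmorphV rmorph_nat; ring. Qed.

Lemma im_real f : real_valued (im f).
Proof.
by move=> x; rewrite !ffunE /GRing.scale /= !rmorphM rmorphN rmorphB /= conjCK fmorphV rmorph_nat conjCi; ring.
Qed.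

Lemma reim f : f = re f + 'i *: im f.
Proof.
rewrite /im scalerA mulrN -expr2 sqrCi opprK scale1r /re -scalerDr.
apply/ffunP => x; rewrite !ffunE /GRing.scale /=.
have h2 : (2 : C) != 0 by rewrite pnatr_eq0.
by field.
Qed.

Lemma re_mem f : f \in E -> re f \in E.
Proof. by move=> fE; rewrite memvZ // memvD // HE. Qed.

Lemma im_mem f : f \in E -> im f \in E.
Proof. by move=> fE; rewrite !memvZ // memvB // HE. Qed.

Lemma greedy m : (m <= \dim E)%N -> exists X : m.-tuple (Fun C K L),
  free X /\ (forall v, v \in X -> v \in E /\ real_valued v).
Proof.
elim: m => [|m IH] hm.
  by exists [tuple]; split; [exact: nil_free | by []].
have [X [fX hX]] := IH (ltnW hm).
have dX : \dim <<X>>%VS = m by rewrite (eqnP fX) size_tuple.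
have [v vE vX] : exists2 v, v \in E & v \notin <<X>>%VS.
  have [/allP hall|/allPn [v vb vX]] := boolP (all (fun v => v \in <<X>>%VS) (vbasis E)).
    have : (E <= <<X>>)%VS.
      by rewrite -(span_basis (vbasisP E)); apply/span_subvP.
    by move/dimvS; rewrite dX leqNgt hm.
  by exists v => //; exact: vbasis_mem.
have [w [wE wr wX]] : exists w, [/\ w \in E, real_valued w & w \notin <<X>>%VS].
  case: (boolP (re v \in <<X>>%VS)) => hr; last by exists (re v); split => //; [exact: re_mem | exact: re_real].
  case: (boolP (im v \in <<X>>%VS)) => hi; last by exists (im v); split => //; [exact: im_mem | exact: im_real].
  by case/negP: vX; rewrite (reim v) memvD // memvZ.
exists [tuple of w :: X]; split.
  rewrite /free /= size_tuple.
  have sub : (<<X>> <= <<w :: X>>)%VS by rewrite span_cons addvSr.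
  have lt : (\dim <<X>>%VS < \dim <<w :: X>>%VS)%N.
    rewrite (ltn_leqif (dimv_leqif_eq sub)); apply/negP => /eqP eqX.
    by case/negP: wX; rewrite eqX memv_span // mem_head.
  have := dim_span (w :: X); rewrite /= size_tuple dX in lt *.
  by move=> le; rewrite eqn_leq le lt.
by move=> z; rewrite in_cons => /orP[/eqP ->|/hX].
Qed.
End Greedy.
Arguments re {C K L} f.
Arguments im {C K L} f.
Arguments re_mem {C K L E} HE {f}.
Arguments im_mem {C K L E} HE {f}.
Arguments re_real {C K L} f.
Arguments im_real {C K L} f.
Arguments reim {C K L} f.

Lemma conjf_sum (C : numClosedFieldType) (K L : finType) n (c : 'I_n -> C)
  (g : 'I_n -> Fun C K L) :
  conjf (\sum_i c i *: g i) = \sum_i (c i)^* *: conjf (g i).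
Proof.
apply/ffunP => x; rewrite ffunE !sum_ffunE rmorph_sum; apply: eq_bigr => i _.
by rewrite !ffunE /GRing.scale /= rmorphM.
Qed.

Theorem lemma2p4 (C : numClosedFieldType) (K L : finType) (n : nat)
  (HK : #|K| = n) (HL : #|L| = n)
  (u : K -> L -> C) (Hu : unitary u) (Hnz : forall k l, u k l != 0) :
  (* every berezin_eigenspace is invariant under pointwise conjugation *)
  (forall (theta : C) (f : Fun C K L),
      f \in berezin_eigenspace u theta -> conjf f \in berezin_eigenspace u theta) /\
  (* for an eigenvalue theta of multiplicity k ... *)
  (forall (theta : C) (k : nat),
      k = \dim (berezin_eigenspace u theta) -> (0 < k)%N ->
      (* the berezin_eigenspace is the (real) direct sum of real-valued and purely
         imaginary eigenfunctions *)
      (forall f, f \in berezin_eigenspace u theta ->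
         exists g h : Fun C K L,
           [/\ g \in berezin_eigenspace u theta, real_valued g,
               h \in berezin_eigenspace u theta, imag_valued h & f = g + h]) /\
      (forall f : Fun C K L, f \in berezin_eigenspace u theta ->
         real_valued f -> imag_valued f -> f = 0) /\
      (* the real vector space of real-valued eigenfunctions has real dim k *)
      (exists g : 'I_k -> Fun C K L,
         [/\ forall i, g i \in berezin_eigenspace u theta /\ real_valued (g i),
             forall r : 'I_k -> C, (forall i, r i \is Num.real) ->
               \sum_i r i *: g i = 0 -> forall i, r i = 0 &
             forall f, f \in berezin_eigenspace u theta -> real_valued f ->
               exists2 r : 'I_k -> C, (forall i, r i \is Num.real) &
                 f = \sum_i r i *: g i]) /\
      (* the real vector space of purely imaginary eigenfunctions has real dim k *)
      (exists h : 'I_k -> Fun C K L,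
         [/\ forall i, h i \in berezin_eigenspace u theta /\ imag_valued (h i),
             forall r : 'I_k -> C, (forall i, r i \is Num.real) ->
               \sum_i r i *: h i = 0 -> forall i, r i = 0 &
             forall f, f \in berezin_eigenspace u theta -> imag_valued f ->
               exists2 r : 'I_k -> C, (forall i, r i \is Num.real) &
                 f = \sum_i r i *: h i])).
Proof.
have HE theta f : f \in berezin_eigenspace u theta -> conjf f \in berezin_eigenspace u theta.
  by rewrite !memE => /eqP/(@conj_eig C K L u Hu Hnz) ->.
split => // theta k hk _.
set E := berezin_eigenspace u theta in HE hk *.
have HE' := HE theta.
split.
  move=> f fE; exists (re f), ('i *: im f); split.
  - by have := re_mem HE' fE.
  - exact: re_real.
  - by rewrite memvZ // (im_mem HE').
  - move=> x; have e : ('i *: im f) x = 'i * im f x by rewrite ffunE.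
    rewrite e rmorphM /= conjCi (im_real f x) mulNr //.
  - exact: reim.
split.
  move=> f _ fr fi; apply/ffunP => x; have := fr x; rewrite fi ffunE => /eqP.
  rewrite eq_sym -subr_eq0 opprK -mulr2n mulrn_eq0 /= => /eqP.
  done.
have hkl : (k <= \dim E)%N by rewrite hk.
have [X [fX hX]] := @greedy C K L E HE' k hkl.
have bX : basis_of E X.
  rewrite basisEfree fX size_tuple -hk leqnn andbT /=.
  by apply/span_subvP => v /hX [].
have Xi (i : 'I_k) : X`_i \in E /\ real_valued X`_i by apply: hX; apply: mem_nth; rewrite size_tuple.
have indep : forall r : 'I_k -> C, \sum_i r i *: X`_i = 0 -> forall i, r i = 0.
  by move: fX => /freeP.
have span_real f : f \in E -> real_valued f ->
    exists2 r : 'I_k -> C, (forall i, r i \is Num.real) & f = \sum_i r i *: X`_i.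
  move=> fE fr; have fX' : f \in <<X>>%VS by rewrite (span_basis bX).
  have ef := coord_span fX'.
  exists (fun i => coord X i f) => // i.
  rewrite CrealE; apply/eqP.
  have e2 : f = \sum_i0 (coord X i0 f)^* *: X`_i0.
    have -> : \sum_i0 (coord X i0 f)^* *: X`_i0 = conjf (\sum_i0 coord X i0 f *: X`_i0).
      rewrite conjf_sum; apply: eq_bigr => j _; congr (_ *: _).
      by apply/ffunP => x; rewrite ffunE (Xi j).2.
    by rewrite -ef; apply/ffunP => x; rewrite ffunE fr.
  by rewrite {2}e2 coord_sum_free.
split.
  exists (fun i => X`_i); split => //.
  by move=> r _; apply: indep.
exists (fun i => 'i *: X`_i); split.
- move=> i; split; first by rewrite memvZ // (Xi i).1.
  by move=> x; rewrite !ffunE /GRing.scale /= rmorphM /= conjCi (Xi i).2 mulNr.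
- move=> r _ h; apply: indep.
  have : 'i *: \sum_i r i *: X`_i = 0.
    by rewrite scaler_sumr -[RHS]h; apply: eq_bigr => i _; rewrite !scalerA mulrC.
  by move/eqP; rewrite scaler_eq0 (negPf (@neq0Ci C)) /= => /eqP.
- move=> f fE fi.
  have [r rr ef] := span_real ((- 'i) *: f) (memvZ _ fE)
    (fun x => ltac:(rewrite !ffunE /GRing.scale /= rmorphM /= rmorphN /= conjCi fi; ring)).
  exists r => //.
  have -> : f = 'i *: ((- 'i) *: f) by rewrite scalerA mulrN -expr2 sqrCi opprK scale1r.
  rewrite ef scaler_sumr; apply: eq_bigr => i _; by rewrite !scalerA mulrC.
Qed.
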